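(* Let $\mathbf{J}\in\mathbb{R}^{n\times n}$ be a real symmetric matrix with zero diagonal, and let $\alpha,\beta>0$ be such that $\lambda_{\min}(\mathbf{J}+\alpha\mathbf{I})>0$. Let $\mathcal{T}(\boldsymbol{x})=\varphi(\beta^{-1}(\mathbf{J}+\alpha\mathbf{I})\boldsymbol{x})$ with $\varphi$ the componentwise real cube root, let $\boldsymbol{x}^{(0)}\in\mathbb{R}^n$ be arbitrary, $\boldsymbol{x}^{(k+1)}=\mathcal{T}(\boldsymbol{x}^{(k)})$, and let $\boldsymbol{x}^*$ be the limit of $\{\boldsymbol{x}^{(k)}\}$. Suppose all components of $\boldsymbol{x}^*$ are nonzero and $\|\mathbf{J}_{\mathcal{T}}(\boldsymbol{x}^* )\|_2<1$, where $\mathbf{J}_{\mathcal{T}}$ denotes the Jacobian matrix of $\mathcal{T}$ and $\|\cdot\|_2$ the spectral norm (largest singular value). Then $\boldsymbol{x}^*$ is a strict local minimizer of $\mathcal{H}(\boldsymbol{x})=\frac{\beta}{4}\sum_i x_i^4-\frac{\alpha}{2}\sum_i x_i^2-\frac12\boldsymbol{x}^\top\mathbf{J}\boldsymbol{x}$.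
   Context: Under the stated hypotheses the iterates $\boldsymbol{x}^{(k)}$ (the DOCH iterates for minimizing $\mathcal{H}$) converge, so the limit $\boldsymbol{x}^*$ exists. *)

(* Defs.v *)
From HB Require Import structures.
From mathcomp Require Import all_boot all_order all_algebra.
From mathcomp Require Import all_classical all_reals all_analysis.
Set Implicit Arguments. Unset Strict Implicit. Unset Printing Implicit Defensive.
Import Order.TTheory GRing.Theory Num.Theory.
Import numFieldNormedType.Exports.
Local Open Scope classical_set_scope.
Local Open Scope ring_scope.

Definition cbrt {R : realType} (x : R) : R :=
  if 0 <= x then x `^ (3^-1) else - ((- x) `^ (3^-1)).

(* smallest eigenvalue (the set of eigenvalues of a real symmetric matrix
   is a nonempty finite set of reals when n > 0) *)
Definition lambda_min {R : realType} (n : nat) (M : 'M[R]_n) : R :=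
  inf [set a : R | eigenvalue M a].

(* spectral norm = largest singular value = sqrt of the largest eigenvalue of M^T M *)
Definition spectral_norm {R : realType} (n : nat) (M : 'M[R]_n) : R :=
  Num.sqrt (sup [set a : R | eigenvalue (M^T *m M) a]).

Definition Tmap {R : realType} (n : nat) (J : 'M[R]_n) (alpha beta : R)
  (x : 'cV[R]_n) : 'cV[R]_n :=
  map_mx cbrt (beta^-1 *: ((J + alpha%:M) *m x)).

Definition jacobianT {R : realType} (n : nat) (F : 'cV[R]_n -> 'cV[R]_n)
  (x : 'cV[R]_n) : 'M[R]_n :=
  \matrix_(i, j) (derive1 (fun t : R => F (x + t *: delta_mx j 0) i 0) 0).

Definition Hfun {R : realType} (n : nat) (J : 'M[R]_n) (alpha beta : R)
  (x : 'cV[R]_n) : R :=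
  beta / 4 * \sum_i (x i 0) ^+ 4 - alpha / 2 * \sum_i (x i 0) ^+ 2
  - 2^-1 * (x^T *m J *m x) 0 0.

Definition strict_local_min {R : realType} (n : nat) (f : 'cV[R]_n -> R)
  (x : 'cV[R]_n) : Prop :=
  \forall y \near x, y != x -> f x < f y.

(* Main.v *)
Require Import Defs.
From HB Require Import structures.
From mathcomp Require Import all_boot all_order all_algebra.
From mathcomp Require Import all_classical all_reals all_analysis.
From mathcomp Require Import ring lra.
Set Implicit Arguments. Unset Strict Implicit. Unset Printing Implicit Defensive.
Import Order.TTheory GRing.Theory Num.Theory.
Import numFieldNormedType.Exports.
Local Open Scope classical_set_scope.
Local Open Scope ring_scope.

Section Ray.
Variable R : realType.
Variable n : nat.
Variable S : 'M[R]_n.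
Hypothesis Ssym : forall i j, S i j = S j i.

Definition qf (v : 'I_n -> R) := \sum_i \sum_j v i * S i j * v j.
Definition bf (v w : 'I_n -> R) := \sum_i \sum_j v i * S i j * w j.
Definition Nf (v : 'I_n -> R) := \sum_i v i ^+ 2.
Definition df (v w : 'I_n -> R) := \sum_i v i * w i.

Lemma bfC v w : bf v w = bf w v.
Proof.
rewrite /bf exchange_big; apply: eq_bigr => i _; apply: eq_bigr => j _.
by rewrite Ssym; ring.
Qed.

Lemma qf_add v w t : qf (fun i => v i + t * w i) = qf v + 2 * t * bf w v + t ^+ 2 * qf w.
Proof.
have -> : qf (fun i => v i + t * w i) = qf v + t * bf w v + t * bf v w + t ^+ 2 * qf w.
  rewrite /qf /bf !mulr_sumr -!big_split /=; apply: eq_bigr => i _.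
  rewrite !mulr_sumr -!big_split /=; apply: eq_bigr => j _; ring.
rewrite (bfC v w); ring.
Qed.

Lemma Nf_add v w t : Nf (fun i => v i + t * w i) = Nf v + 2 * t * df w v + t ^+ 2 * Nf w.
Proof.
rewrite /Nf /df !mulr_sumr -!big_split /=; apply: eq_bigr => i _; ring.
Qed.

Lemma qf_scale a v : qf (fun i => a * v i) = a ^+ 2 * qf v.
Proof.
rewrite /qf !mulr_sumr; apply: eq_bigr => i _; rewrite !mulr_sumr; apply: eq_bigr => j _; ring.
Qed.

Lemma Nf_scale a v : Nf (fun i => a * v i) = a ^+ 2 * Nf v.
Proof. rewrite /Nf !mulr_sumr; apply: eq_bigr => i _; ring. Qed.

Lemma Nf_ge0 v : 0 <= Nf v.
Proof. by apply: sumr_ge0 => i _; rewrite sqr_ge0. Qed.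

Lemma Nf_ge_coord v i : v i ^+ 2 <= Nf v.
Proof.
rewrite /Nf (bigD1 i) //= lerDl; apply: sumr_ge0 => j _; exact: sqr_ge0.
Qed.

Lemma Nf_eq0 v : Nf v = 0 -> forall i, v i = 0.
Proof.
move=> N0 i; have := Nf_ge_coord v i; rewrite N0 => h.
by apply/eqP; rewrite -sqrf_eq0 eq_le h sqr_ge0.
Qed.

Lemma qf_cont : continuous (fun v : 'rV[R]_n => qf (fun i => v ord0 i)).
Proof.
apply: continuous_big => [|i _]; first exact: add_continuous.
apply: (@continuous_big _ _ +%R 0 xpredT) => [|j _]; first exact: add_continuous.
move=> v; apply: (@continuousM _ _ (fun v : 'rV[R]_n => v ord0 i * S i j) (fun v => v ord0 j)).
  apply: (@continuousM _ _ (fun v : 'rV[R]_n => v ord0 i) (fun=> S i j)).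
    exact: coord_continuous.
  exact: cst_continuous.
exact: coord_continuous.
Qed.

Lemma Nf_cont : continuous (fun v : 'rV[R]_n => Nf (fun i => v ord0 i)).
Proof.
apply: continuous_big => [|i _]; first exact: add_continuous.
move=> v; rewrite /continuous_at.
under eq_fun do rewrite expr2.
rewrite expr2; apply: (@continuousM _ _ (fun v : 'rV[R]_n => v ord0 i) (fun v => v ord0 i)); exact: coord_continuous.
Qed.

Lemma max_sphere : (0 < n)%N ->
  exists c : 'I_n -> R, Nf c = 1 /\ forall v, Nf v = 1 -> qf v <= qf c.
Proof.
move=> n0.
pose K := [set v : 'rV[R]_n | Nf (fun i => v ord0 i) = 1].
have K0 : K !=set0.
  exists (\row_j ((j == Ordinal n0)%:R : R)); rewrite /K /= /Nf (bigD1 (Ordinal n0)) //=.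
  rewrite mxE eqxx expr1n big1 ?addr0 // => j /negbTE jn; by rewrite mxE jn expr0n.
have Kc : compact K.
  have Bc : compact [set v : 'rV[R]_n | forall i, `[(-1 : R), 1]%classic (v ord0 i)].
    apply: (@rV_compact _ _ (fun=> `[(-1 : R), 1]%classic)).
    by move=> _; apply: segment_compact.
  apply: (subclosed_compact _ Bc).
  - have -> : K = (fun v : 'rV[R]_n => Nf (fun i => v ord0 i)) @^-1` [set x | x = 1] by [].
    apply: preimage_closed; first by move=> v _; exact: Nf_cont.
    exact: closed_eq.
  - move=> v Kv i /=; have := Nf_ge_coord (fun i => v ord0 i) i; rewrite Kv => h.
    rewrite in_itv /=; apply/andP; split; nra.
have [c cK cmax] := compact_EVT_max K0 Kc (continuous_subspaceT qf_cont).
exists (fun i => c ord0 i); split; first by move: cK; rewrite inE.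
move=> v Nv; pose rv := \row_j v j.
have := cmax rv; rewrite inE => /(_ _)/=.
have e : (fun i => rv ord0 i) = v by apply/funext => i; rewrite mxE.
rewrite e; apply; rewrite /K /= e //.
Qed.

Lemma rayleigh_bound c : Nf c = 1 -> (forall v, Nf v = 1 -> qf v <= qf c) ->
  forall v, qf v <= qf c * Nf v.
Proof.
move=> Nc cmax v.
have [N0|Nn0] := eqVneq (Nf v) 0.
  have -> : qf v = 0.
    by rewrite /qf big1 // => i _; rewrite big1 // => j _; rewrite (Nf_eq0 N0 i) !mul0r.
  by rewrite N0 mulr0.
have Npos : 0 < Nf v by rewrite lt_neqAle eq_sym Nn0 Nf_ge0.
pose s := Num.sqrt (Nf v).
have s0 : 0 < s by rewrite sqrtr_gt0.
have s2 : s ^+ 2 = Nf v by rewrite sqr_sqrtr // ltW.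
have := cmax (fun i => s^-1 * v i); rewrite qf_scale Nf_scale exprVn s2 mulVf //.
move=> /(_ erefl) h.
have -> : qf v = Nf v * ((Nf v)^-1 * qf v) by rewrite mulrA mulfV // mul1r.
rewrite [qf c * _]mulrC; apply: ler_wpM2l; first exact: ltW.
by move: h; rewrite mulrC.
Qed.

Lemma rayleigh_eig c mu : Nf c = 1 -> qf c = mu -> (forall v, qf v <= mu * Nf v) ->
  forall i, \sum_j S i j * c j = mu * c i.
Proof.
move=> Nc qc hb.
have key : forall w, bf w c = mu * df w c.
  move=> w; set g := mu * df w c - bf w c.
  set P := mu * Nf w - qf w.
  have P0 : 0 <= P by rewrite /P subr_ge0.
  have ht : forall t, 0 <= 2 * t * g + t ^+ 2 * P.
    move=> t; have := hb (fun i => c i + t * w i).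
    rewrite qf_add Nf_add Nc qc /g /P => h; nra.
  have := ht (- g / (P + 1)).
  have P1 : P + 1 != 0 by rewrite lt0r_neq0 // ltr_wpDl.
  have -> : 2 * (- g / (P + 1)) * g + (- g / (P + 1)) ^+ 2 * P
     = - (g ^+ 2 * (P + 2)) / (P + 1) ^+ 2 by field.
  rewrite pmulr_lge0 ?invr_gt0 ?exprn_gt0 ?ltr_wpDl // oppr_ge0 => h.
  have g0 : g ^+ 2 * (P + 2) = 0.
    apply/eqP; rewrite eq_le h mulr_ge0 ?sqr_ge0 //; lra.
  move/eqP: g0; rewrite mulf_eq0 sqrf_eq0 => /orP[/eqP|]; last first.
    by move=> /eqP; lra.
  by rewrite /g => /eqP; rewrite subr_eq0 => /eqP ->.
move=> i; have := key (fun k => (k == i)%:R).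
rewrite /bf /df (bigD1 i) //= [X in _ + X]big1; last first.
  move=> k kn; rewrite big1 // => j _; rewrite (negbTE kn) !mul0r //.
rewrite [X in mu * X](bigD1 i) //= [X in mu * (_ + X)]big1; last by move=> k kn; rewrite (negbTE kn) mul0r.
by rewrite eqxx !mul1r !addr0; under eq_bigr do rewrite mul1r.

Qed.

End Ray.

Lemma rayleigh (R : realType) (n : nat) (S : 'M[R]_n) : (0 < n)%N ->
  (forall i j, S i j = S j i) ->
  exists mu (w : 'I_n -> R), Nf w = 1 /\ (forall i, \sum_j S i j * w j = mu * w i) /\
    (forall v, qf S v <= mu * Nf v).
Proof.
move=> n0 Ss; have [c [Nc cmax]] := max_sphere S n0.
have hb := rayleigh_bound Nc cmax.
exists (qf S c), c; split => //; split => //.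
apply: (@rayleigh_eig R n S Ss c (qf S c) Nc erefl hb).
Qed.

Section C. Variable R : realType.
Lemma powR3K (u : R) : 0 <= u -> (u `^ 3^-1) ^+ 3 = u.
Proof.
by move=> u0; rewrite -powR_mulrn ?powR_ge0 // -powRrM mulVf ?powRr1 // pnatr_eq0.
Qed.
Lemma powR3K' (y : R) : 0 <= y -> (y ^+ 3) `^ 3^-1 = y.
Proof.
by move=> y0; rewrite -powR_mulrn // -powRrM mulfV ?powRr1 // pnatr_eq0.
Qed.
Lemma cube_cbrt (u : R) : cbrt u ^+ 3 = u.
Proof.
rewrite /cbrt; case: ifPn => u0; first exact: powR3K.
rewrite exprNn powR3K; last by rewrite oppr_ge0 ltW // ltNge.
by rewrite -signr_odd /= expr1 mulN1r opprK.
Qed.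
Lemma cbrt_cube (y : R) : cbrt (y ^+ 3) = y.
Proof.
rewrite /cbrt; case: ifPn => y0.
  apply: powR3K'; case: (lerP 0 y) => // yn.
  have e : y ^+ 3 = y * (y * y) by rewrite !exprS expr0 mulr1.
  have yy : 0 < y * y by nra.
  move: y0; rewrite e => h; nra.
have yn : y < 0.
  move: y0; case: (ltrP y 0) => // yp; rewrite exprn_ge0 //.
have e : - (y ^+ 3) = (- y) ^+ 3 by rewrite exprNn -signr_odd /= expr1 mulN1r.
by rewrite e powR3K' ?opprK // oppr_ge0 ltW.
Qed.
Lemma cbrt_cont : continuous (@cbrt R).
Proof.
move=> u; rewrite -[u]cube_cbrt.
have := @near_can_continuous R (fun y => y ^+ 3) cbrt (cbrt u).
move=> h; apply: (nbhs_singleton (h _ _)).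
- by near=> y; exact: cbrt_cube.
- by near=> y; exact: exprn_continuous.
Unshelve. all: by end_near. Qed.
Lemma cbrt_derive (y : R) : y != 0 -> is_derive (y ^+ 3) 1 (@cbrt R) ((3 * y ^+ 2)^-1).
Proof.
move=> y0.
apply: (@is_derive_inverse R (fun y => y ^+ 3) cbrt).
- by near=> z; exact: cbrt_cube.
- by near=> z; exact: exprn_continuous.
- have := is_deriveX 3 (is_derive_id y 1).
  rewrite /= scaler1 => h. exact: h.
- by rewrite mulf_neq0 // ?pnatr_eq0 // expf_neq0.
Unshelve. all: by end_near. Qed.
End C.


Lemma Nf_pos_row (R : realType) n (v : 'rV[R]_n) : v != 0 -> 0 < Nf (fun j => v 0 j).
Proof.
move=> vn0; rewrite lt_neqAle Nf_ge0 andbT; apply: contra vn0 => /eqP h.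
apply/eqP/rowP => j; rewrite mxE; by have := Nf_eq0 (esym h) j; move=> ->.
Qed.

Lemma qf_row (R : realType) n (S : 'M[R]_n) (v : 'rV[R]_n) :
  qf S (fun j => v 0 j) = \sum_j (v *m S) 0 j * v 0 j.
Proof.
rewrite /qf exchange_big; apply: eq_bigr => j _; rewrite !mxE mulr_suml.
by apply: eq_bigr.
Qed.

Lemma gram_sym (R : realType) n (M : 'M[R]_n) i j : (M^T *m M) i j = (M^T *m M) j i.
Proof. rewrite !mxE; apply: eq_bigr => k _; rewrite !mxE mulrC //. Qed.

Theorem propositionS11 (R : realType) (n : nat) (J : 'M[R]_n) (alpha beta : R)
  (x : nat -> 'cV[R]_n) (xstar : 'cV[R]_n) :
  J^T = J ->
  (forall i, J i i = 0) ->
  0 < alpha -> 0 < beta ->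
  0 < lambda_min (J + alpha%:M) ->
  (forall k, x k.+1 = Tmap J alpha beta (x k)) ->
  x @ \oo --> xstar ->
  (forall i, xstar i 0 != 0) ->
  spectral_norm (jacobianT (Tmap J alpha beta) xstar) < 1 ->
  strict_local_min (Hfun J alpha beta) xstar.
Proof.
move=> JT Jd a0 b0 _ xrec xcvg xnz hspec.
have Jsym : forall i j, J i j = J j i.
  by move=> i j; rewrite -{1}JT mxE.
pose A := J + alpha%:M.
have Asym : forall i j, A i j = A j i.
  by move=> i j; rewrite !mxE Jsym eq_sym.
have Asum : forall (y : 'I_n -> R) i, \sum_j A i j * y j = \sum_j J i j * y j + alpha * y i.
  move=> y i; rewrite /A (eq_bigr (fun j => J i j * y j + (alpha *+ (i == j)) * y j)); last first.
    by move=> j _; rewrite !mxE mulrDl.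
  rewrite big_split /=; congr (_ + _); rewrite (bigD1 i) //= big1 ?addr0 ?eqxx ?mulr1n //.
  by move=> j /negbTE; rewrite eq_sym => ->; rewrite mulr0n mul0r.
have Tm : forall y i, Tmap J alpha beta y i 0 = cbrt (beta^-1 * \sum_j A i j * y j 0).
  by move=> y i; rewrite /Tmap !mxE.
clearbody A.
have [n0|npos] := posnP n.
  subst n; near=> y => yx; exfalso; move: yx.
  by rewrite (flatmx0 y) (flatmx0 xstar) eqxx.
have ci : forall i, (fun k => x k i 0) @ \oo --> xstar i 0.
  move=> i; exact: (cvg_comp _ _ xcvg (@coord_continuous R n 1 i 0 xstar)).
have fp : forall i, xstar i 0 = cbrt (beta^-1 * \sum_j A i j * xstar j 0).
  move=> i.
  have c1 : (fun k => x k.+1 i 0) @ \oo --> xstar i 0.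
    by have := ci i; rewrite -(cvg_shiftS (fun k => x k i 0)).
  have c2 : (fun k => x k.+1 i 0) @ \oo --> cbrt (beta^-1 * \sum_j A i j * xstar j 0).
    under eq_fun do rewrite xrec Tm.
    apply: continuous_cvg; first exact: cbrt_cont.
    apply: cvgM; first exact: cvg_cst.
    apply: cvg_big => [|j _]; first exact: add_continuous.
    apply: cvgM; first exact: cvg_cst.
    exact: ci.
  exact: (cvg_unique _ c1 c2).
have grad : forall i, beta * xstar i 0 ^+ 3 = \sum_j A i j * xstar j 0.
  by move=> i; rewrite {1}(fp i) cube_cbrt mulrA mulfV ?gt_eqF // mul1r.
have lin : forall (c d : R), is_derive (0:R) 1 (fun t : R => d + t * c) c.
  move=> c d; apply: is_derive_eq.
  by rewrite add0r mul1r scaler0 add0r -[RHS]mulr1.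
have jac : forall i j, jacobianT (Tmap J alpha beta) xstar i j
    = (3 * xstar i 0 ^+ 2)^-1 * (beta^-1 * A i j).
  move=> i j; rewrite /jacobianT mxE.
  have e : (fun t => Tmap J alpha beta (xstar + t *: delta_mx j 0) i 0)
      = (fun t => cbrt (xstar i 0 ^+ 3 + t * (beta^-1 * A i j))).
    apply/funext => t; rewrite Tm; congr cbrt.
    rewrite (eq_bigr (fun k => A i k * xstar k 0 + t * (A i k * (k == j)%:R))); last first.
      by move=> k _; rewrite !mxE eqxx andbT; ring.
    rewrite big_split /= -grad -mulr_sumr (bigD1 j) //= big1 ?eqxx ?addr0; last first.
      by move=> k /negbTE ->; rewrite mulr0.
    rewrite mulr1 mulrDr mulrA mulVf ?gt_eqF // mul1r; ring.
  rewrite e.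
  have D : is_derive (0:R) 1 (fun t => cbrt (xstar i 0 ^+ 3 + t * (beta^-1 * A i j)))
      ((3 * xstar i 0 ^+ 2)^-1 * (beta^-1 * A i j)).
    apply: (@is_derive1_comp R cbrt (fun t => xstar i 0 ^+ 3 + t * (beta^-1 * A i j))).
      rewrite mul0r addr0; exact: cbrt_derive.
  by rewrite derive1E (@derive_val _ _ _ _ _ _ _ D).
have [M [jacM hspecM]] : exists M : 'M[R]_n,
    (forall i j, M i j = (3 * xstar i 0 ^+ 2)^-1 * (beta^-1 * A i j)) /\ spectral_norm M < 1.
  by exists (jacobianT (Tmap J alpha beta) xstar).
clear jac hspec.
pose S1 := M^T *m M.
have S1sym : forall i j, S1 i j = S1 j i by exact: gram_sym.
have [mu1 [w1 [Nw1 [eig1 bnd1]]]] := rayleigh npos S1sym.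
have mu1_eig : eigenvalue S1 mu1.
  apply/eigenvalueP; exists (\row_j w1 j).
    apply/rowP => k; rewrite !mxE -eig1; apply: eq_bigr => j _.
    by rewrite mxE S1sym mulrC.
  apply/eqP => h; move: Nw1; rewrite /Nf big1 => [|j _].
    by move/esym/eqP; rewrite oner_eq0.
  by move/rowP: h => /(_ j); rewrite !mxE => ->; rewrite expr0n.
have ub : has_ubound [set a | eigenvalue S1 a].
  exists mu1 => a /eigenvalueP [v vS vn0].
  have vp := Nf_pos_row vn0.
  have := bnd1 (fun j => v 0 j); rewrite qf_row vS.
  have -> : \sum_j (a *: v) 0 j * v 0 j = a * Nf (fun j => v 0 j).
    by rewrite /Nf mulr_sumr; apply: eq_bigr => j _; rewrite !mxE expr2 mulrA.
  by rewrite ler_pM2r.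
have mu1_le := ub_le_sup ub mu1_eig.
have mu1_lt1 : mu1 < 1.
  move: hspecM; rewrite /spectral_norm -/S1.
  set s := sup _ in mu1_le *.
  case: (ltP s 1) => [|s1]; first by move=> h _; exact: le_lt_trans mu1_le h.
  have s0 : 0 <= s by apply: le_trans s1.
  have := sqr_sqrtr s0; have := sqrtr_ge0 s; move=> h1 h2 h3; nra.
pose d i := `|xstar i 0|.
have dpos : forall i, 0 < d i by move=> i; rewrite normr_gt0.
have dsq : forall i, d i ^+ 2 = xstar i 0 ^+ 2 by move=> i; rewrite /d real_normK // num_real.
pose B := \matrix_(i, j) (A i j / (3 * beta * d i * d j)).
have Bsym : forall i j, B i j = B j i.
  by move=> i j; rewrite !mxE Asym; congr (_ / _); ring.
have [mu [w [Nw [eigB bndB]]]] := rayleigh npos Bsym.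
pose u j := w j / d j.
have Mu : forall i, \sum_j M i j * u j = mu * u i.
  move=> i.
  have -> : \sum_j M i j * u j = (d i)^-1 * \sum_j B i j * w j.
    rewrite mulr_sumr; apply: eq_bigr => j _.
    rewrite jacM /u /B mxE -dsq.
    have := dpos i; have := dpos j; move=> hj hi.
    field; rewrite ?gt_eqF //; apply/and3P; split; rewrite ?gt_eqF //.
  by rewrite eigB /u; field; rewrite gt_eqF.
have qS1 : qf S1 u = \sum_k (\sum_i M k i * u i) ^+ 2.
  have -> : \sum_k (\sum_i M k i * u i) ^+ 2
      = \sum_k \sum_i \sum_j (u i * (M k i * M k j) * u j).
    apply: eq_bigr => k _; rewrite expr2 mulr_suml; apply: eq_bigr => i _.
    rewrite mulr_sumr; apply: eq_bigr => j _; ring.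
  rewrite exchange_big /qf; apply: eq_bigr => i _.
  rewrite exchange_big; apply: eq_bigr => j _.
  rewrite !mxE mulr_sumr mulr_suml; apply: eq_bigr => k _; rewrite !mxE.
  by [].
have Nu : 0 < Nf u.
  rewrite lt_neqAle Nf_ge0 andbT; apply/negP => /eqP h.
  move: Nw; rewrite /Nf big1 => [|j _].
    by move/esym/eqP; rewrite oner_eq0.
  have := Nf_eq0 (esym h) j; rewrite /u => h'.
  have -> : w j = w j / d j * d j by rewrite divfK // gt_eqF.
  by rewrite h' mul0r expr0n.
have mu_lt1 : mu < 1.
  have := bnd1 u; rewrite qS1.
  have -> : \sum_k (\sum_i M k i * u i) ^+ 2 = mu ^+ 2 * Nf u.
    rewrite /Nf mulr_sumr; apply: eq_bigr => k _; rewrite Mu; ring.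
  move=> h.
  have : mu ^+ 2 <= mu1 by rewrite -(ler_pM2r Nu).
  move=> h2; nra.
have quad : forall h : 'I_n -> R,
    qf A h <= mu * \sum_i 3 * beta * xstar i 0 ^+ 2 * h i ^+ 2.
  move=> h; pose v i := d i * h i.
  have -> : qf A h = 3 * beta * qf B v.
    rewrite /qf mulr_sumr; apply: eq_bigr => i _; rewrite mulr_sumr; apply: eq_bigr => j _.
    rewrite mxE /v; have := dpos i; have := dpos j; move=> hj hi.
    field; apply/and3P; split; rewrite ?gt_eqF //.
  have -> : \sum_i 3 * beta * xstar i 0 ^+ 2 * h i ^+ 2 = 3 * beta * Nf v.
    rewrite /Nf mulr_sumr; apply: eq_bigr => i _; rewrite /v -dsq; ring.
  rewrite mulrCA; apply: ler_wpM2l; last exact: bndB.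
  by rewrite mulr_ge0 // ltW.
have Hs : forall y : 'cV[R]_n, Hfun J alpha beta y = beta / 4 * \sum_i y i 0 ^+ 4
    - alpha / 2 * \sum_i y i 0 ^+ 2 - 2^-1 * qf J (fun i => y i 0).
  move=> y; rewrite /Hfun; congr (_ - _ * _).
  rewrite mxE /qf exchange_big; apply: eq_bigr => j _; rewrite !mxE mulr_suml.
  by apply: eq_bigr => i _; rewrite mxE.
pose xs i := xstar i 0.
have key : forall y : 'cV[R]_n, Hfun J alpha beta y - Hfun J alpha beta xstar =
    \sum_i (beta / 4 * (6 * xs i ^+ 2 * (y i 0 - xs i) ^+ 2 + 4 * xs i * (y i 0 - xs i) ^+ 3
       + (y i 0 - xs i) ^+ 4)) - 2^-1 * qf A (fun i => y i 0 - xs i).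
  move=> y; set h := (fun i => y i 0 - xs i).
  rewrite !Hs.
  have ey : (fun i => y i 0) = (fun i => xs i + 1 * h i).
    by apply/funext => i; rewrite /h /xs; ring.
  rewrite ey qf_add // -/xs.
  pose P1 := \sum_i xs i ^+ 3 * h i.
  pose P2 := \sum_i xs i * h i.
  pose Q := \sum_i (6 * xs i ^+ 2 * h i ^+ 2 + 4 * xs i * h i ^+ 3 + h i ^+ 4).
  pose Hh := \sum_i h i ^+ 2.
  have e1 : \sum_i y i 0 ^+ 4 = \sum_i xstar i 0 ^+ 4 + 4 * P1 + Q.
    rewrite /P1 /Q mulr_sumr -!big_split; apply: eq_bigr => i _ /=; rewrite /h /xs; ring.
  have e2 : \sum_i y i 0 ^+ 2 = \sum_i xstar i 0 ^+ 2 + 2 * P2 + Hh.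
    rewrite /P2 /Hh mulr_sumr -!big_split; apply: eq_bigr => i _ /=; rewrite /h /xs; ring.
  have e3 : bf J h xs = beta * P1 - alpha * P2.
    rewrite /bf /P1 /P2 !mulr_sumr -sumrB; apply: eq_bigr => i _.
    have gi := grad i; rewrite Asum in gi.
    have -> : \sum_j h i * J i j * xs j = h i * \sum_j J i j * xs j.
      by rewrite mulr_sumr; apply: eq_bigr => j _; rewrite mulrA.
    have -> : \sum_j J i j * xs j = beta * xs i ^+ 3 - alpha * xs i.
      rewrite /xs gi; ring.
    ring.
  have e4 : qf A h = qf J h + alpha * Hh.
    rewrite /qf /Hh mulr_sumr -big_split; apply: eq_bigr => i _ /=.
    have -> : \sum_j h i * A i j * h j = h i * \sum_j A i j * h j.
      by rewrite mulr_sumr; apply: eq_bigr => j _; rewrite mulrA.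
    have -> : \sum_j h i * J i j * h j = h i * \sum_j J i j * h j.
      by rewrite mulr_sumr; apply: eq_bigr => j _; rewrite mulrA.
    rewrite Asum; ring.
  have e5 : \sum_i (beta / 4 * (6 * xs i ^+ 2 * (y i 0 - xs i) ^+ 2
      + 4 * xs i * (y i 0 - xs i) ^+ 3 + (y i 0 - xs i) ^+ 4))
      = beta / 4 * Q by rewrite /Q mulr_sumr.
  rewrite e1 e2 e3 e4 e5 expr1n mul1r; by field.
pose r i := 3 / 2 * (1 - mu) * d i.
have rpos : forall i, 0 < r i.
  move=> i; rewrite /r mulr_gt0 // ?dpos // mulr_gt0 //; lra.
have nearall : \forall y \near xstar, forall i, `|xstar i 0 - (y : 'cV[R]_n) i 0| < r i.
  have ff := @filter_forall _ _ (fun i (y : 'cV[R]_n) => `|xstar i 0 - y i 0| < r i) (nbhs xstar) _; apply: ff => i.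
  have H := cvgr_dist_lt _ _ (@coord_continuous R n 1 i 0 xstar) _ (rpos i).
  by apply: H; exact: nbhs_filter.
move: nearall; apply: filterS => y hy yx.
rewrite -subr_gt0 key.
set h := (fun i => y i 0 - xs i).
pose T i := beta * h i ^+ 2 * (3 / 2 * (1 - mu) * xs i ^+ 2 + xs i * h i + h i ^+ 2 / 4).
have lowb : \sum_i T i <= \sum_i (beta / 4 * (6 * xs i ^+ 2 * h i ^+ 2 + 4 * xs i * h i ^+ 3
       + h i ^+ 4)) - 2^-1 * qf A h.
  have := quad h.
  have -> : \sum_i T i = \sum_i (beta / 4 * (6 * xs i ^+ 2 * h i ^+ 2 + 4 * xs i * h i ^+ 3
       + h i ^+ 4)) - 2^-1 * (mu * \sum_i 3 * beta * xstar i 0 ^+ 2 * h i ^+ 2).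
    rewrite !mulr_sumr -sumrB; apply: eq_bigr => i _; rewrite /T /xs; by field.
  move=> hq; rewrite lerD2l lerN2; apply: ler_wpM2l => //; lra.
apply: lt_le_trans lowb.
have Tpos : forall i, h i != 0 -> 0 < T i.
  move=> i hi.
  have hri := hy i; rewrite /r in hri.
  have dx : d i ^+ 2 = xs i ^+ 2 by exact: dsq.
  have nh : `|xstar i 0 - y i 0| = `|h i| by rewrite /h /xs distrC.
  rewrite nh in hri.
  have lb : - (d i * `|h i|) <= xs i * h i.
    rewrite /d -normrM lerNl; apply: le_trans (ler_norm _) _; by rewrite normrN.
  have h2 : 0 < h i ^+ 2 by rewrite exprn_even_gt0.
  have hn : 0 <= `|h i| by [].
  have dd := dpos i.
  rewrite /T /=; apply: mulr_gt0; first exact: mulr_gt0.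
  have : 0 < 3 / 2 * (1 - mu) * xs i ^+ 2 - d i * `|h i|.
    rewrite -dx; nra.
  have : 0 <= h i ^+ 2 / 4 by rewrite divr_ge0 ?sqr_ge0.
  lra.
have Tge0 : forall i, 0 <= T i.
  move=> i; have [h0|hn0] := eqVneq (h i) 0; last exact: ltW (Tpos i hn0).
  by rewrite /T h0 expr0n /= mulr0 mul0r.
have [i hi] : exists i, h i != 0.
  apply/existsP; apply: contraR yx => /existsPn hall.
  apply/eqP/matrixP => i j; rewrite (ord1 j).
  have := hall i; rewrite negbK /h subr_eq0 => /eqP; done.
rewrite (bigD1 i) //=; apply: ltr_pwDl; first exact: Tpos.
by apply: sumr_ge0 => k _; exact: Tge0.
Unshelve. all: by end_near. Qed.
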